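(* Let $i\in J$. Let $\sigma_i$ be the permutation of $\{0,1,\dots,l\}$ such that $$t_iw_iw_0(v_0^\circ,v_1^\circ,\dots,v_l^\circ)=(v^\circ_{\sigma_i(0)},v^\circ_{\sigma_i(1)},\dots,v^\circ_{\sigma_i(l)}).$$ Then $\mathrm{sign}(\sigma_i)=(-1)^{l(w_iw_0)}$.
   Context: Setting: $G$ is the group of $K$-points of an adjoint quasi-simple group split over a non-archimedean local field $K$ (valuation $\omega$, $\omega(K^* )=\mathbb Z$), $T$ a maximal split torus, $\Phi$ its (reduced, irreducible) root system with basis $\alpha_1,\dots,\alpha_l$, $W$ the Weyl group, $V=X_*(T)\otimes\mathbb R$. $\tilde\alpha=\sum_i n_i\alpha_i$ is the highest root, $\varpi_1,\dots,\varpi_l$ the fundamental coweights, and $J=\{i: n_i=1\}$. The fundamental chamber $C_0=\{x\in V:\langle x,\alpha_j\rangle>0,\ \langle x,\tilde\alpha\rangle<1\}$ has vertices $v_0^\circ=0$ and $v_j^\circ=\varpi_j/n_j$ ($1\le j\le l$). $t_i\in T$ is an element with $\nu(t_i)=\varpi_i$, where $\nu:T\to X_*(T)$ satisfies $\langle\nu(t),\chi\rangle=-\omega(\chi(t))$; $t_i$ acts on $V$ (as affine space) by translation by $\varpi_i$ and $W$ acts linearly, so $t_iw_iw_0(x)=w_iw_0(x)+\varpi_i$. $w_0$ is the longest element of $W$ and $w_i$ the longest element of the Weyl group generated by the reflections $s_{\alpha_j}$, $j\ne i$; for $i\in J$ one has $t_iw_iw_0C_0=C_0$, so $t_iw_iw_0$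 permutes the vertices of $C_0$. $l(\cdot)$ is the length in $W$ with respect to the simple reflections. *)

(* Defs.v *)
From HB Require Import structures.
From mathcomp Require Import all_boot all_order all_algebra all_fingroup.
From mathcomp Require Import reals.
Set Implicit Arguments. Unset Strict Implicit. Unset Printing Implicit Defensive.
Import Order.TTheory GRing.Theory Num.Theory.
Local Open Scope ring_scope.

(* Euclidean model: V = 'rV[R]_l with the standard inner product; V is
   identified with its dual, so <x, a> = dot x a and the coroot of a is
   2a/(a,a). *)
Section RootSystems.
Variables (R : realType) (l : nat).
Notation vec := 'rV[R]_l.

Definition dot (x y : vec) : R := (x *m y^T) ord0 ord0.

Definition refl (a x : vec) : vec := x - ((2 * dot x a) / dot a a) *: a.

Definition root_system (Phi : seq vec) : Prop :=
  [/\ 0 \notin Phi,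
      (forall x : vec, (forall a, a \in Phi -> dot x a = 0) -> x = 0),
      (forall a b, a \in Phi -> b \in Phi -> refl a b \in Phi),
      (forall a b, a \in Phi -> b \in Phi -> (2 * dot b a) / dot a a \is a Num.int)
    & (forall a (c : R), a \in Phi -> c *: a \in Phi -> c = 1 \/ c = -1)].

Definition irreducible_rs (Phi : seq vec) : Prop :=
  forall P : pred vec,
    (forall a b, a \in Phi -> b \in Phi -> P a -> ~~ P b -> dot a b = 0) ->
    (forall a, a \in Phi -> P a) \/ (forall a, a \in Phi -> ~~ P a).

Definition is_base (Phi : seq vec) (alpha : 'I_l -> vec) : Prop :=
  (forall j, alpha j \in Phi) /\
  (forall b, b \in Phi -> exists c : 'I_l -> int,
      b = \sum_j (c j)%:~R *: alpha j /\
      ((forall j, 0 <= c j) \/ (forall j, c j <= 0))).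

Definition highest_root (Phi : seq vec) (alpha : 'I_l -> vec) (ta : vec) : Prop :=
  ta \in Phi /\
  (forall b, b \in Phi -> exists c : 'I_l -> int,
      ta - b = \sum_j (c j)%:~R *: alpha j /\ (forall j, 0 <= c j)).

Definition wact (alpha : 'I_l -> vec) (s : seq 'I_l) (x : vec) : vec :=
  foldr (fun j y => refl (alpha j) y) x s.

Definition reduced_word (alpha : 'I_l -> vec) (s : seq 'I_l) : Prop :=
  forall s', (forall x, wact alpha s' x = wact alpha s x) -> (size s <= size s')%N.

Definition longest_word (alpha : 'I_l -> vec) (S : pred 'I_l) (s : seq 'I_l) : Prop :=
  [/\ all S s, reduced_word alpha s &
      forall s', all S s' -> reduced_word alpha s' -> (size s' <= size s)%N].

Definition weyl_length (alpha : 'I_l -> vec) (s : seq 'I_l) (n : nat) : Prop :=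
  exists s', [/\ forall x, wact alpha s' x = wact alpha s x,
                 reduced_word alpha s' & size s' = n].

(* vertices of C_0: index 0 |-> 0, index j+1 |-> varpi_j / n_j *)
Definition vertex (varpi : 'I_l -> vec) (ncoef : 'I_l -> R) (k : 'I_l.+1) : vec :=
  match unlift ord0 k with
  | Some j => (ncoef j)^-1 *: varpi j
  | None => 0
  end.

End RootSystems.

(* Main.v *)
Require Import Defs.
From HB Require Import structures.
From mathcomp Require Import all_boot all_order all_algebra all_fingroup.
From mathcomp Require Import reals ring lra.
Set Implicit Arguments. Unset Strict Implicit. Unset Printing Implicit Defensive.
Import Order.TTheory GRing.Theory Num.Theory.
Local Open Scope ring_scope.

Section H.
Variable R : realType.

Lemma det_rank1 (l : nat) (u v : 'rV[R]_l) :
  \det (1%:M + u^T *m v) = 1 + (v *m u^T) 0 0.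
Proof.
pose B := block_mx (1%:M : 'M[R]_1) (- v) (u^T) (1%:M : 'M[R]_l).
have E1 : B = block_mx 1%:M 0 (u^T) 1%:M *m block_mx 1%:M (- v) 0 (1%:M + u^T *m v).
  rewrite mulmx_block !mul1mx !mulmx0 !mul0mx !addr0 mulmxN.
  by rewrite /B mulmx1 addrCA addNr addr0.
have E2 : B = block_mx (1%:M + v *m u^T) (- v) 0 1%:M *m block_mx 1%:M 0 (u^T) 1%:M.
  rewrite mulmx_block !mulmx1 !mul1mx ?mulmx0 ?mul0mx ?addr0 ?add0r ?mulNmx.
  by rewrite /B addrK.
have := congr1 determinant E2; rewrite {1}E1 !det_mulmx det_lblock det_ublock.
rewrite !det1 !mul1r !mulr1 det_ublock det1 mulr1 det_mx11 !mxE eqxx => ->.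
by [].
Qed.

Variable l : nat.
Notation vec := 'rV[R]_l.

Lemma dotE (x y : vec) : dot x y = \sum_k x 0 k * y 0 k.
Proof. by rewrite /dot !mxE; apply: eq_bigr => k _; rewrite mxE. Qed.

Lemma dot_self_neq0 (a : vec) : a != 0 -> dot a a != 0.
Proof.
move=> an0; rewrite dotE; apply/negP => /eqP h.
have h2 : forall k, a 0 k * a 0 k = 0.
  move=> k; move/eqP: h; rewrite psumr_eq0; last by move=> k' _; rewrite -expr2 sqr_ge0.
  by move=> /allP H; apply/eqP; move: (H k (mem_index_enum k)).
apply/negP: an0; rewrite negbK; apply/eqP/matrixP => i k.
rewrite (ord1 i) mxE; by move: (h2 k) => /eqP; rewrite mulf_eq0 orbb => /eqP.
Qed.

Lemma mx11_mul (m : 'M[R]_1) (a : vec) : m *m a = m 0 0 *: a.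
Proof. by rewrite {1}(mx11_scalar m) mul_scalar_mx. Qed.

Definition Pm (a : vec) : 'M[R]_l := 1%:M - (2 / dot a a) *: (a^T *m a).

Lemma reflE (a x : vec) : refl a x = x *m Pm a.
Proof.
rewrite /refl /Pm mulmxBr mulmx1 -scalemxAr mulmxA mx11_mul scalerA.
congr (_ - _ *: _); rewrite -/(dot x a); by rewrite mulrAC.
Qed.

Lemma det_Pm (a : vec) : dot a a != 0 -> \det (Pm a) = -1.
Proof.
move=> h; have -> : Pm a = 1%:M + a^T *m (- (2 / dot a a) *: a).
  by rewrite /Pm -scalemxAr scaleNr.
rewrite det_rank1 -scalemxAl mxE -/(dot a a) mulNr -mulrA mulVf //.
by rewrite mulr1; lra.
Qed.

Definition Mw (alpha : 'I_l -> vec) (s : seq 'I_l) : 'M[R]_l :=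
  foldr (fun j m => m *m Pm (alpha j)) 1%:M s.

Lemma wactE alpha s x : wact alpha s x = x *m Mw alpha s.
Proof.
elim: s => [|j s IH] /=; first by rewrite mulmx1.
by rewrite /wact /= -/(wact alpha s x) IH reflE mulmxA.
Qed.

Lemma det_Mw alpha s : (forall j, dot (alpha j) (alpha j) != 0) ->
  \det (Mw alpha s) = (-1) ^+ size s.
Proof.
move=> h; elim: s => [|j s IH] /=; first by rewrite det1.
by rewrite det_mulmx IH det_Pm // exprS mulrC.
Qed.

Lemma mx_ext (A B : 'M[R]_l) : (forall x : vec, x *m A = x *m B) -> A = B.
Proof. by move=> h; apply/row_matrixP => k; rewrite !rowE h. Qed.


Lemma dot_lin (x : vec) (d : 'I_l -> R) (y : 'I_l -> vec) :
  dot x (\sum_k d k *: y k) = \sum_k d k * dot x (y k).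
Proof.
rewrite dotE; under eq_bigr => c _ do rewrite summxE mulr_sumr.
rewrite exchange_big /=; apply: eq_bigr => k _; rewrite dotE mulr_sumr.
by apply: eq_bigr => c _; rewrite mxE mulrCA.
Qed.

Lemma dotB (x y z : vec) : dot x (y - z) = dot x y - dot x z.
Proof.
rewrite !dotE -sumrB; apply: eq_bigr => c _; by rewrite !mxE mulrBr.
Qed.

Lemma vrow (varpi : 'I_l -> vec) (ncoef : 'I_l -> R) (k : 'I_l.+1) :
  let Vt := \matrix_(j, c) ((ncoef j)^-1 * varpi j 0 c) in
  row k (block_mx (1%:M : 'M[R]_1) 0 (const_mx 1) Vt) = row_mx 1%:M (vertex varpi ncoef k).
Proof.
move=> Vt; apply/rowP => c; rewrite !mxE.
case: splitP => [k1 Hk|k1 Hk].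
  have -> : k = ord0 by apply: ord_inj; rewrite Hk (ord1 k1).
  rewrite /vertex unlift_none mxE; case: splitP => [c1 _|c1 _]; rewrite ?mxE //.
  by rewrite (ord1 k1) (ord1 c1).
have -> : k = lift ord0 k1 by apply: ord_inj; rewrite Hk.
rewrite /vertex liftK mxE; case: splitP => [c1 _|c1 _]; rewrite !mxE //.
by rewrite (ord1 c1).
Qed.

End H.

Unset Implicit Arguments.
Theorem mainTheorem4 (R : realType) (l : nat) (Phi : seq 'rV[R]_l)
  (alpha : 'I_l -> 'rV[R]_l) (ta : 'rV[R]_l) (ncoef : 'I_l -> R)
  (varpi : 'I_l -> 'rV[R]_l) (w0 : seq 'I_l) (i : 'I_l) (wi : seq 'I_l) :
  root_system Phi -> irreducible_rs Phi -> is_base Phi alpha ->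
  highest_root Phi alpha ta ->
  ta = \sum_j ncoef j *: alpha j ->
  (forall j k, dot (varpi j) (alpha k) = (j == k)%:R) ->
  longest_word alpha predT w0 ->
  longest_word alpha (fun j => j != i) wi ->
  ncoef i = 1 ->
  forall (sigma : 'S_(l.+1)) (n : nat),
    (forall k : 'I_l.+1,
       wact alpha (wi ++ w0) (vertex varpi ncoef k) + varpi i
       = vertex varpi ncoef (sigma k)) ->
    weyl_length alpha (wi ++ w0) n ->
    (-1) ^+ (odd_perm sigma) = (-1) ^+ n :> int.
Proof.
move=> Hrs _ Hbase Hhr Hta Hdual _ _ _ sigma n Hsig Hlen.
have anz : forall j, dot (alpha j) (alpha j) != 0.
  move=> j; apply: dot_self_neq0; apply/eqP => e.
  case: Hrs => H0 _ _ _ _; move: H0; rewrite -e.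
  by rewrite (proj1 Hbase j).
have key : forall j (d : 'I_l -> R), dot (varpi j) (\sum_k d k *: alpha k) = d j.
  move=> j d; rewrite dot_lin (bigD1 j) //= Hdual eqxx mulr1 big1 ?addr0 //.
  by move=> k /negbTE kj; rewrite Hdual eq_sym kj mulr0.
have npos : forall j, ncoef j != 0.
  move=> j; case: Hhr => _ H; have [c [Hc Hpos]] := H _ (proj1 Hbase j).
  have := congr1 (dot (varpi j)) Hc; rewrite dotB key Hdual eqxx Hta key.
  move=> e; have : 1 <= ncoef j.
    have : 0 <= (c j)%:~R :> R by rewrite ler0z.
    rewrite /= in e; lra.
  by move=> h; apply: lt0r_neq0; lra.
pose Vt := \matrix_(j, c) ((ncoef j)^-1 * varpi j 0 c) : 'M[R]_l.
pose Bm := \matrix_(c, k) (ncoef k * alpha k 0 c) : 'M[R]_l.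
have VB : Vt *m Bm = 1%:M.
  apply/matrixP => j k; rewrite !mxE.
  under eq_bigr => c _ do rewrite !mxE.
  transitivity ((ncoef j)^-1 * ncoef k * dot (varpi j) (alpha k)).
    by rewrite dotE mulr_sumr; apply: eq_bigr => c _; ring.
  rewrite Hdual; case: eqP => [->|_]; last by rewrite !mulr0.
  by rewrite mulr1 mulVf.
have dVt : \det Vt != 0.
  have := congr1 determinant VB; rewrite det_mulmx det1 => h.
  by apply/eqP => e; move: h; rewrite e mul0r => /eqP; rewrite eq_sym oner_eq0.
pose M := Mw alpha (wi ++ w0).
have dM : \det M = (-1) ^+ n.
  case: Hlen => s' [Hs Hr Hsz].
  have <- : Mw alpha s' = M by apply: mx_ext => x; rewrite -!wactE Hs.
  by rewrite det_Mw // Hsz.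
pose Vm := block_mx (1%:M : 'M[R]_1) 0 (const_mx 1) Vt.
pose A := block_mx (1%:M : 'M[R]_1) (varpi i) 0 M.
have E : Vm *m A = perm_mx sigma *m Vm.
  rewrite -row_permE; apply/row_matrixP => k.
  have -> : row k (row_perm sigma Vm) = row (sigma k) Vm by apply/rowP => c; rewrite !mxE.
  rewrite row_mul /Vm !vrow mul_row_block !mul1mx !mulmx0 addr0 -wactE addrC Hsig.
  by [].
have := congr1 determinant E; rewrite !det_mulmx det_perm det_lblock det_ublock.
rewrite !det1 !mul1r dM mulrC => /mulIf => /(_ dVt) hR.
move: hR; rewrite -[(-1) ^+ n :> int]signr_odd -[(-1) ^+ n :> R]signr_odd.
have neq : ((-1) ^+ 1 : R) != (-1) ^+ 0 by rewrite expr1 expr0 -subr_eq0; apply: ltr0_neq0; lra.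
case: (odd n); case: (odd_perm sigma) => //= h.
  by move: neq; rewrite h eqxx.
by move: neq; rewrite h eqxx.
Qed.
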